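(* Let $\lambda_N^1=\max(\lambda_{\max}(L_1),\lambda_{\max}(L_2))$ be the greatest of the largest Laplacian eigenvalues of the two layers. For $c\ge0$ define $$H(c)=\min_{w\ge0,\ w^T\boldsymbol 1=c}\ \big(\lambda_n[L(w)]-\lambda_2[L(w)]\big).$$ Then $H(c)\ge\lambda_N^1-\frac{2c}{N}$ for all $c\ge0$, and the inequality is strict for $c\neq0$.
   Context: A multiplex network consists of two layers $G_1,G_2$, simple undirected graphs on $N$ vertices each with Laplacians $L_1,L_2\in\mathbb{R}^{N\times N}$; the $i$-th vertex of $G_1$ is joined by an interlayer edge of weight $w_i\ge0$ to the $i$-th vertex of $G_2$. With $W=\operatorname{diag}(w)$ the multiplex Laplacian is $L(w)=\begin{bmatrix}L_1+W&-W\\-W&L_2+W\end{bmatrix}\in\mathbb{R}^{2N\times 2N}$, with eigenvalues $0=\lambda_1\le\lambda_2\le\dots\le\lambda_n$, $n=2N$. $\boldsymbol 1$ is the all-ones vector. *)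

(* Defs.v *)
From HB Require Import structures.
From mathcomp Require Import all_boot all_order all_algebra.
From mathcomp Require Import boolp classical_sets reals.
Set Implicit Arguments. Unset Strict Implicit. Unset Printing Implicit Defensive.
Import Order.TTheory GRing.Theory Num.Theory.
Local Open Scope ring_scope.

Definition simple_graph (N : nat) (e : rel 'I_N) : Prop :=
  (forall i j, e i j = e j i) /\ (forall i, e i i = false).

Definition laplacian (R : realType) (N : nat) (e : rel 'I_N) : 'M[R]_N :=
  \matrix_(i, j) (if i == j then (#|[set k | e i k]|)%:R
                  else if e i j then -1 else 0).

Definition multiplex_laplacian (R : realType) (N : nat) (L1 L2 : 'M[R]_N)
  (w : 'rV[R]_N) : 'M[R]_(N + N) :=
  block_mx (L1 + diag_mx w) (- diag_mx w) (- diag_mx w) (L2 + diag_mx w).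

Definition is_spectrum (R : realType) (n : nat) (A : 'M[R]_n) (s : seq R) :=
  sorted <=%R s /\ char_poly A = \prod_(x <- s) ('X - x%:P).

(* The sorted spectrum (well defined for real symmetric matrices, whose
   characteristic polynomial splits over R; [::] otherwise). *)
Definition spectrum (R : realType) (n : nat) (A : 'M[R]_n) : seq R :=
  match pselect (exists s, is_spectrum A s) with
  | left e => projT1 (cid e)
  | right _ => [::]
  end.

(* lambda_k(A), 1-indexed: lambda_1 <= lambda_2 <= ... <= lambda_n. *)
Definition eig (R : realType) (n : nat) (A : 'M[R]_n) (k : nat) : R :=
  nth 0 (spectrum A) k.-1.

Definition eig_max (R : realType) (n : nat) (A : 'M[R]_n) : R := eig A n.

(* H(c) = min over w >= 0, w^T 1 = c of lambda_n[L(w)] - lambda_2[L(w)]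
   (taken as the infimum of the set of attained values). *)
Definition Hmin (R : realType) (N : nat) (L1 L2 : 'M[R]_N) (c : R) : R :=
  inf [set (eig (multiplex_laplacian L1 L2 w) (N + N)
            - eig (multiplex_laplacian L1 L2 w) 2)
      | w in [set w : 'rV[R]_N | (forall i, 0 <= w 0 i) /\ \sum_i w 0 i = c]].

(* Main.v *)
Require Import Defs.
From HB Require Import structures.
From mathcomp Require Import all_boot all_order all_algebra.
From mathcomp Require Import boolp classical_sets reals.
From mathcomp Require Import complex spectral sesquilinear zify ring lra.
Import Order.TTheory GRing.Theory Num.Theory.
Local Open Scope ring_scope.

Module Helpers.
Set Implicit Arguments. Unset Strict Implicit. Unset Printing Implicit Defensive.
Local Open Scope sesquilinear_scope.
Lemma char_poly_conj (F : fieldType) n (P Q D : 'M[F]_n) :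
  Q *m P = 1%:M -> char_poly (Q *m D *m P) = char_poly D.
Proof.
move=> QP.
have QP' : map_mx polyC Q *m map_mx polyC P = 1%:M.
  by rewrite -map_mxM QP map_mx1.
rewrite /char_poly /char_poly_mx !map_mxM.
have E : ('X%:M : 'M[{poly F}]_n) = map_mx polyC Q *m 'X%:M *m map_mx polyC P.
  by rewrite scalar_mxC -mulmxA QP' mulmx1.
rewrite {1}E -mulmxBl -mulmxBr !det_mulmx -mulrA mulrCA -det_mulmx QP' det1 mulr1.
by [].
Qed.
Section S.
Variable R : realType.
Local Notation toC := (real_complex R).

Lemma realC_real (x : R) : toC x \is Num.real.
Proof. by rewrite complex_real. Qed.

Lemma conjC_realC (x : R) : (toC x)^* = toC x.
Proof. exact/conj_Creal/realC_real. Qed.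

Lemma sym_herm n (A : 'M[R]_n) : A^T = A -> map_mx toC A \is hermsymmx.
Proof.
move=> sA; apply: realsym_hermsym.
  apply/is_hermitianmxP; rewrite expr0 scale1r (@map_mx_id _ _ _ idfun) //.
  by rewrite map_trmx sA.
by apply/mxOverP => i j; rewrite mxE realC_real.
Qed.

Lemma real_sym_spectral n (A : 'M[R]_n) : A^T = A ->
  exists (P : 'M[R[i]]_n) (r : 'rV[R]_n),
   [/\ P *m P^t* = 1%:M, P^t* *m P = 1%:M &
       map_mx toC A = P^t* *m diag_mx (map_mx toC r) *m P].
Proof.
move=> sA; have H := sym_herm sA.
set Ac := map_mx toC A.
have /orthomx_spectralP E := hermitian_normalmx H.
have U := spectral_unitarymx Ac.
have dR := hermitian_spectral_diag_real H.
exists (spectralmx Ac), (map_mx (@complex.Re R) (spectral_diag Ac)).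
have PP : spectralmx Ac *m (spectralmx Ac)^t* = 1%:M by apply/unitarymxP.
split => //; first exact: mulmx1C.
rewrite -invmx_unitary // /Ac {1}E; congr (_ *m diag_mx _ *m _).
apply/matrixP => i j; rewrite !mxE /= complexRe.
by symmetry; apply/Creal_ReP; exact: (mxOverP dR).
Qed.

Lemma spec_data n (A : 'M[R]_n) : A^T = A ->
  exists (P : 'M[R[i]]_n) (r : 'rV[R]_n),
   [/\ P *m P^t* = 1%:M, P^t* *m P = 1%:M,
       map_mx toC A = P^t* *m diag_mx (map_mx toC r) *m P &
       char_poly A = \prod_(i < n) ('X - (r 0 i)%:P)].
Proof.
move=> sA; have [P [r [PP PP' E]]] := real_sym_spectral sA.
exists P, r; split => //.
apply: (@map_poly_inj _ _ toC).
rewrite map_char_poly E char_poly_conj // char_poly_trig ?diag_mx_is_trig //.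
rewrite rmorph_prod; apply: eq_bigr => i _.
by rewrite !mxE eqxx /= mulr1n rmorphB /= map_polyX map_polyC.
Qed.

Lemma spectrumP n (A : 'M[R]_n) : A^T = A ->
  exists (P : 'M[R[i]]_n) (r : 'rV[R]_n),
   [/\ P *m P^t* = 1%:M, P^t* *m P = 1%:M,
       map_mx toC A = P^t* *m diag_mx (map_mx toC r) *m P,
       is_spectrum A (spectrum A) &
       perm_eq (spectrum A) [seq r 0 i | i <- index_enum 'I_n]].
Proof.
move=> sA; have [P [r [PP PP' E cA]]] := spec_data sA.
have sp : is_spectrum A (spectrum A).
  rewrite /spectrum; case: pselect => [e|ne]; first exact: projT2 (cid e).
  exfalso; apply: ne; exists (sort <=%R [seq r 0 i | i <- index_enum 'I_n]).
  split; first by apply: sort_sorted; exact: le_total.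
  by rewrite (perm_big _ (permEl (perm_sort _ _))) big_map cA.
exists P, r; split => //.
apply: prod_XsubC_eq; case: sp => _ <-.
by rewrite big_map cA.
Qed.

Lemma tCmx_real m n (x : 'M[R]_(m, n)) : (map_mx toC x)^t* = map_mx toC x^T.
Proof. by apply/matrixP => i j; rewrite !mxE conjC_realC. Qed.

Lemma quad_diag n (P : 'M[R[i]]_n) (r : 'rV[R]_n) (v : 'rV[R[i]]_n) :
  (v *m (P^t* *m diag_mx (map_mx toC r) *m P) *m v^t*) 0 0 =
  \sum_i (v *m P^t*) 0 i * toC (r 0 i) * ((v *m P^t*) 0 i)^*.
Proof.
have -> : v *m (P^t* *m diag_mx (map_mx toC r) *m P) *m v^t* =
   (v *m P^t*) *m diag_mx (map_mx toC r) *m (v *m P^t*)^t*.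
  by rewrite trmx_mul map_mxM trmxCK !mulmxA.
rewrite mul_mx_diag !mxE; apply: eq_bigr => i _; rewrite !mxE.
by [].
Qed.

Lemma norm_unit n (P : 'M[R[i]]_n) (v : 'rV[R[i]]_n) : P^t* *m P = 1%:M ->
  (v *m v^t*) 0 0 = \sum_i (v *m P^t*) 0 i * ((v *m P^t*) 0 i)^*.
Proof.
move=> PP.
have -> : v *m v^t* = (v *m P^t*) *m (v *m P^t*)^t*.
  by rewrite trmx_mul map_mxM trmxCK mulmxA -(mulmxA v) PP mulmx1.
by rewrite !mxE; apply: eq_bigr => i _; rewrite !mxE.
Qed.

Lemma sum_le_real n (y : 'rV[R[i]]_n) (r : 'rV[R]_n) (l : R) :
  (forall i, r 0 i <= l) ->
  \sum_i y 0 i * toC (r 0 i) * (y 0 i)^* <= toC l * \sum_i y 0 i * (y 0 i)^*.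
Proof.
move=> H; rewrite mulr_sumr; apply: ler_sum => i _.
rewrite mulrAC [toC l * _]mulrC ler_wpM2l ?mul_conjC_ge0 //.
by rewrite lecR.
Qed.

Lemma sum_ge_real n (y : 'rV[R[i]]_n) (r : 'rV[R]_n) (l : R) :
  (forall i, y 0 i = 0 \/ l <= r 0 i) ->
  toC l * \sum_i y 0 i * (y 0 i)^* <= \sum_i y 0 i * toC (r 0 i) * (y 0 i)^*.
Proof.
move=> H; rewrite mulr_sumr; apply: ler_sum => i _.
case: (H i) => [->|lr]; first by rewrite !mul0r mulr0.
rewrite mulrAC [toC l * _]mulrC ler_wpM2l ?mul_conjC_ge0 //.
by rewrite lecR.
Qed.

Lemma spec_size n (A : 'M[R]_n) : A^T = A -> size (spectrum A) = n.
Proof.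
move=> sA; have [P [r [_ _ _ _ pe]]] := spectrumP sA.
by rewrite (perm_size pe) size_map /index_enum unlock -enumT size_enum_ord.
Qed.

Lemma mem_spec n (A : 'M[R]_n) (r : 'rV[R]_n) i :
  perm_eq (spectrum A) [seq r 0 i | i <- index_enum 'I_n] ->
  r 0 i \in spectrum A.
Proof. by move=> pe; rewrite (perm_mem pe) map_f ?mem_index_enum. Qed.

Lemma le_last n (s : seq R) x : sorted <=%R s -> size s = n -> x \in s ->
  x <= nth 0 s n.-1.
Proof.
move=> so sz xs; rewrite -(nth_index 0 xs).
have := index_mem x s; rewrite xs sz.
move: (index x s) => i ilt.
have H := sorted_leq_nth le_trans lexx 0 so.
apply: H; rewrite ?inE ?sz.
all: by move: ilt; case: (n) => //= m; rewrite ?ltnS.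
Qed.

Lemma toC_quad n (A : 'M[R]_n) (x : 'rV[R]_n) :
  toC ((x *m A *m x^T) 0 0) =
  ((map_mx toC x) *m (map_mx toC A) *m (map_mx toC x)^t*) 0 0.
Proof. by rewrite tCmx_real -!map_mxM [RHS]mxE. Qed.

Lemma toC_norm n (x : 'rV[R]_n) :
  toC ((x *m x^T) 0 0) = ((map_mx toC x) *m (map_mx toC x)^t*) 0 0.
Proof. by rewrite tCmx_real -!map_mxM [RHS]mxE. Qed.
Lemma eig_max_quad n (A : 'M[R]_n) (x : 'rV[R]_n) : A^T = A -> (0 < n)%N ->
  (x *m A *m x^T) 0 0 <= eig A n * (x *m x^T) 0 0.
Proof.
move=> sA n0; have [P [r [PP PP' E [so _] pe]]] := spectrumP sA.
rewrite -lecR rmorphM /= toC_quad toC_norm E quad_diag (norm_unit _ PP').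
apply: sum_le_real => i; rewrite /eig.
apply: le_last => //; first exact: spec_size.
exact: mem_spec.
Qed.

Lemma normC2 (z : R[i]) : z * z^* = toC (complex.Re z ^+ 2 + complex.Im z ^+ 2).
Proof.
rewrite -sqr_normc normc_def -rmorphXn /= sqr_sqrtr //.
by rewrite addr_ge0 // sqr_ge0.
Qed.

Lemma conj_lin n (a b : R[i]) (u w : 'rV[R[i]]_n) :
  (a *: u - b *: w)^t* = a^* *: u^t* - b^* *: w^t*.
Proof. by apply/matrixP => i j; rewrite !mxE rmorphB !rmorphM. Qed.

Lemma toC_bil n (A : 'M[R]_n) (x z : 'rV[R]_n) :
  toC ((x *m A *m z^T) 0 0) =
  ((map_mx toC x) *m (map_mx toC A) *m (map_mx toC z)^t*) 0 0.
Proof. by rewrite tCmx_real -!map_mxM [RHS]mxE. Qed.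

Lemma toC_bil1 n (x z : 'rV[R]_n) :
  toC ((x *m z^T) 0 0) = ((map_mx toC x) *m (map_mx toC z)^t*) 0 0.
Proof. by rewrite tCmx_real -!map_mxM [RHS]mxE. Qed.

Lemma count_le1 (s : seq R) : sorted <=%R s -> (1 < size s)%N ->
  (count (fun x : R => (x < nth 0 s 1)%R) s <= 1)%N.
Proof.
case: s => [|a [|b t]] //= /andP[_ pt] _.
rewrite ltxx add0n.
have : all (fun x : R => b <= x) t by exact: (order_path_min le_trans pt).
move=> /allP H.
have -> : count (fun x : R => (x < b)%R) t = 0%N.
  apply/eqP; rewrite -leqn0 leqNgt -has_count; apply/hasPn => y yt.
  by rewrite -leNgt H.
by rewrite addn0; case: (a < b).
Qed.

Lemma uniq_small n (A : 'M[R]_n) (r : 'rV[R]_n) i j : A^T = A -> (1 < n)%N ->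
  is_spectrum A (spectrum A) ->
  perm_eq (spectrum A) [seq r 0 i | i <- index_enum 'I_n] ->
  r 0 i < eig A 2 -> r 0 j < eig A 2 -> i = j.
Proof.
move=> sA n1 [so _] pe ri rj.
have c1 := count_le1 so; rewrite (spec_size sA) in c1; have {}c1 := c1 n1.
rewrite (permP pe) count_map in c1.
move: c1; rewrite -size_filter deprecated_filter_index_enum -cardE.
move=> /card_le1_eqP H; apply: H; rewrite ?inE /=.
  exact: rj.
exact: ri.
Qed.

Lemma norm_ge0 n (x : 'rV[R]_n) : 0 <= (x *m x^T) 0 0.
Proof.
rewrite mxE; apply: sumr_ge0 => i _; rewrite mxE.
by rewrite -expr2 sqr_ge0.
Qed.

Lemma final_ineq (l X Q B Al ON : R) : l * (B * X + Al * ON) <= B * Q ->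
  0 < Al -> 0 < ON -> 0 <= B -> 0 <= X -> 0 <= Q -> l * X <= Q.
Proof.
move=> h Al0 ON0 B0 X0 Q0.
have [l0|l0] := leP l 0.
  by apply: le_trans Q0; rewrite mulr_le0_ge0.
have [B00|Bp] := eqVneq B 0.
  move: h; rewrite B00 !mul0r add0r => h.
  have : 0 < l * (Al * ON) by rewrite !mulr_gt0.
  by rewrite ltNge h.
have Bp' : 0 < B by rewrite lt_def Bp B0.
rewrite -(ler_pM2l Bp'); apply: le_trans h.
rewrite mulrA [B * l]mulrC -mulrA ler_pM2l // lerDl.
by rewrite mulr_ge0 // ltW.
Qed.

Lemma eig2_quad n (A : 'M[R]_n) (x : 'rV[R]_n) : A^T = A -> (1 < n)%N ->
  A *m (const_mx 1 : 'rV[R]_n)^T = 0 ->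
  (forall z : 'rV[R]_n, 0 <= (z *m A *m z^T) 0 0) ->
  (x *m (const_mx 1 : 'rV[R]_n)^T) 0 0 = 0 ->
  eig A 2 * (x *m x^T) 0 0 <= (x *m A *m x^T) 0 0.
Proof.
move=> sA n1 A1 psd x1.
have [P [r [PP PP' E sp pe]]] := spectrumP sA.
set l := eig A 2.
set o : 'rV[R]_n := const_mx 1.
set xc := map_mx toC x; set oc := map_mx toC o; set Ac := map_mx toC A.
have key : forall v : 'rV[R[i]]_n,
    (forall i, r 0 i < l -> (v *m P^t*) 0 i = 0) ->
    toC l * (v *m v^t*) 0 0 <= (v *m Ac *m v^t*) 0 0.
  move=> v Hv; rewrite /Ac E quad_diag (norm_unit _ PP'); apply: sum_ge_real => i.
  case: (boolP (r 0 i < l)) => h; first by left; exact: Hv.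
  by right; rewrite leNgt.
have Q0 : 0 <= (x *m A *m x^T) 0 0 := psd x.
case: (pselect (exists i0, r 0 i0 < l)) => [[i0 ri0]|none]; last first.
  rewrite -lecR rmorphM /= toC_quad toC_norm; apply: key => i ri.
  by exfalso; apply: none; exists i.
have [Y eY] : {Y | xc *m P^t* = Y} by exists (xc *m P^t*).
have [Z eZ] : {Z | oc *m P^t* = Z} by exists (oc *m P^t*).
set al := Y 0 i0.
case: (eqVneq al 0) => [al0|alnz].
  rewrite -lecR rmorphM /= toC_quad toC_norm; apply: key => i ri.
  by rewrite (uniq_small sA n1 sp pe ri ri0) -/xc eY.
set be := Z 0 i0.
set v := be *: xc - al *: oc.
have Hv : forall i, r 0 i < l -> (v *m P^t*) 0 i = 0.
  move=> i ri; rewrite (uniq_small sA n1 sp pe ri ri0).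
  by rewrite mulmxBl -!scalemxAl eY eZ !mxE mulrC subrr.
have := key v Hv.
have oA : oc *m Ac = 0.
  rewrite -map_mxM.
  have -> : o *m A = 0 by rewrite -(trmxK (o *m A)) trmx_mul sA A1 trmx0.
  by rewrite map_mx0.
have Ao : Ac *m oc^t* = 0 by rewrite tCmx_real -map_mxM A1 map_mx0.
have xo : (xc *m oc^t*) 0 0 = 0 by rewrite -toC_bil1 x1 rmorph0.
have ox : (oc *m xc^t*) 0 0 = 0.
  rewrite -toC_bil1.
  have -> : o *m x^T = (x *m o^T)^T by rewrite trmx_mul trmxK.
  by rewrite mxE x1 rmorph0.
have qv : (v *m Ac *m v^t*) 0 0 = be^* * be * (xc *m Ac *m xc^t*) 0 0.
  rewrite /v conj_lin -mulmxA mulmxBr -!scalemxAr Ao scaler0 subr0.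
  rewrite -scalemxAr mulmxA mulmxBl -!scalemxAl oA scaler0 subr0 -scalemxAl.
  set M := xc *m Ac *m xc^t*.
  by rewrite !mxE mulrA.
have nv : (v *m v^t*) 0 0 = be^* * be * (xc *m xc^t*) 0 0
                             + al^* * al * (oc *m oc^t*) 0 0.
  rewrite /v conj_lin mulmxBr !mulmxBl -!scalemxAr -!scalemxAl.
  move: xo ox.
  move: (xc *m xc^t*) (xc *m oc^t*) (oc *m xc^t*) (oc *m oc^t*) => X1 X2 X3 X4.
  move=> xo ox; rewrite !mxE xo ox; ring.
rewrite qv nv.
rewrite [be^* * be]mulrC [al^* * al]mulrC !normC2.
rewrite /xc /oc /Ac -toC_quad -!toC_norm -!rmorphM -!rmorphD -!rmorphM lecR => h.
apply: final_ineq h _ _ _ (norm_ge0 x) Q0.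
- rewrite lt_def addr_ge0 ?sqr_ge0 // andbT.
  apply: contra alnz => /eqP H; apply/eqP.
  have := normC2 al; rewrite H rmorph0 => /eqP; rewrite mul_conjC_eq0.
  by move/eqP.
- rewrite mxE (eq_bigr (fun _ => 1)); last by move=> i _; rewrite !mxE mulr1.
  by rewrite sumr_const card_ord ltr0n; case: (n) n1.
- by rewrite addr_ge0 ?sqr_ge0.
Qed.

Section Graph.
Variables (N : nat) (e : rel 'I_N).
Hypothesis esym : forall i j, e i j = e j i.
Hypothesis eirr : forall i, e i i = false.
Local Notation L := (laplacian R e).

Lemma lap_sym : L^T = L.
Proof.
apply/matrixP=> i j; rewrite !mxE eq_sym esym.
by case: eqP => // ->.
Qed.

Lemma lap_deg i : (#|[set k | e i k]|)%:R = \sum_k (e i k)%:R :> R.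
Proof.
rewrite -sum1_card natr_sum big_mkcond /=; apply: eq_bigr => k _.
by rewrite inE; case: (e i k).
Qed.

Lemma lap_deg_le i : (#|[set k | e i k]|)%:R <= N%:R :> R.
Proof. by rewrite ler_nat; apply: leq_trans (max_card _) _; rewrite card_ord. Qed.

Lemma lap_row0 : L *m (const_mx 1 : 'rV[R]_N)^T = 0.
Proof.
apply/matrixP=> i j; rewrite !mxE.
under eq_bigr do rewrite !mxE mulr1.
rewrite (bigD1 i) //= eqxx lap_deg (bigD1 i) //= eirr add0r.
rewrite -big_split /= big1 // => k kn.
rewrite eq_sym (negbTE kn); case: (e i k) => /=; ring.
Qed.

Lemma lap_quad (x : 'rV[R]_N) : (x *m L *m x^T) 0 0 =
  \sum_i \sum_j (e i j)%:R * (x 0 i ^+ 2 - x 0 i * x 0 j).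
Proof.
rewrite mxE; under eq_bigr do rewrite !mxE mulr_suml.
rewrite exchange_big /=; apply: eq_bigr => i _.
rewrite (bigD1 i) //= [RHS](bigD1 i) //= eirr mul0r add0r !mxE eqxx lap_deg.
rewrite (bigD1 i) //= eirr add0r mulr_sumr mulr_suml -big_split /=.
apply: eq_bigr => j jn; rewrite !mxE eq_sym (negbTE jn).
case: (e i j) => /=; ring.
Qed.

Lemma lap_psd (x : 'rV[R]_N) : 0 <= (x *m L *m x^T) 0 0.
Proof.
have H : (x *m L *m x^T) 0 0 + (x *m L *m x^T) 0 0 =
    \sum_i \sum_j (e i j)%:R * (x 0 i - x 0 j) ^+ 2.
  rewrite {1}lap_quad lap_quad [X in _ + X]exchange_big -big_split /=.
  apply: eq_bigr => i _; rewrite -big_split /=; apply: eq_bigr => j _.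
  rewrite (esym j i); ring.
have : 0 <= (x *m L *m x^T) 0 0 + (x *m L *m x^T) 0 0.
  rewrite H; apply: sumr_ge0 => i _; apply: sumr_ge0 => j _.
  by rewrite mulr_ge0 ?ler0n ?sqr_ge0.
move=> h; lra.
Qed.
End Graph.

Lemma addE11 (A B : 'M[R]_1) : (A + B) 0 0 = A 0 0 + B 0 0.
Proof. by rewrite mxE. Qed.
Lemma oppE11 (A : 'M[R]_1) : (- A) 0 0 = - A 0 0.
Proof. by rewrite mxE. Qed.

Section Mpx.
Variables (N : nat) (L1 L2 : 'M[R]_N) (w : 'rV[R]_N).
Local Notation M := (multiplex_laplacian L1 L2 w).

Lemma diag_quad (a b : 'rV[R]_N) :
  (a *m diag_mx w *m b^T) 0 0 = \sum_i a 0 i * w 0 i * b 0 i.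
Proof. by rewrite mul_mx_diag mxE; apply: eq_bigr => i _; rewrite !mxE. Qed.

Lemma mpx_quad (x1 x2 : 'rV[R]_N) :
  (row_mx x1 x2 *m M *m (row_mx x1 x2)^T) 0 0 =
  (x1 *m L1 *m x1^T) 0 0 + (x2 *m L2 *m x2^T) 0 0 +
  \sum_i w 0 i * (x1 0 i - x2 0 i) ^+ 2.
Proof.
rewrite /multiplex_laplacian mul_row_block tr_row_mx mul_row_col.
rewrite !mulmxDr !mulmxDl !mulmxN !mulNmx !addE11 !oppE11.
have H : (x1 *m diag_mx w *m x1^T) 0 0 - (x2 *m diag_mx w *m x1^T) 0 0
   - (x1 *m diag_mx w *m x2^T) 0 0 + (x2 *m diag_mx w *m x2^T) 0 0 =
   \sum_i w 0 i * (x1 0 i - x2 0 i) ^+ 2.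
  rewrite !diag_quad -!sumrB -big_split /=; apply: eq_bigr => i _; ring.
rewrite -H; lra.
Qed.

Hypothesis s1 : L1^T = L1.
Hypothesis s2 : L2^T = L2.
Hypothesis r1 : L1 *m (const_mx 1 : 'rV[R]_N)^T = 0.
Hypothesis r2 : L2 *m (const_mx 1 : 'rV[R]_N)^T = 0.
Hypothesis p1 : forall x : 'rV[R]_N, 0 <= (x *m L1 *m x^T) 0 0.
Hypothesis p2 : forall x : 'rV[R]_N, 0 <= (x *m L2 *m x^T) 0 0.
Hypothesis w0 : forall i, 0 <= w 0 i.

Lemma mpx_sym : M^T = M.
Proof.
by rewrite /multiplex_laplacian tr_block_mx !linearD !linearN /= tr_diag_mx s1 s2.
Qed.

Lemma mpx_row0 : M *m (const_mx 1 : 'rV[R]_(N + N))^T = 0.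
Proof.
rewrite /multiplex_laplacian -row_mx_const tr_row_mx mul_block_col.
rewrite !mulmxDl !mulNmx r1 r2 !add0r subrr addrC subrr.
by rewrite col_mx0.
Qed.

Lemma mpx_psd (z : 'rV[R]_(N + N)) : 0 <= (z *m M *m z^T) 0 0.
Proof.
rewrite -(hsubmxK z) mpx_quad; apply: addr_ge0; first exact: addr_ge0.
by apply: sumr_ge0 => i _; rewrite mulr_ge0 ?sqr_ge0.
Qed.
End Mpx.

Lemma row_sum1 N (x1 x2 : 'rV[R]_N) :
  (row_mx x1 x2 *m (const_mx 1 : 'rV[R]_(N + N))^T) 0 0 =
  (x1 *m (const_mx 1 : 'rV[R]_N)^T) 0 0 + (x2 *m (const_mx 1 : 'rV[R]_N)^T) 0 0.
Proof. by rewrite -row_mx_const tr_row_mx mul_row_col addE11. Qed.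

Lemma row_norm N (x1 x2 : 'rV[R]_N) :
  (row_mx x1 x2 *m (row_mx x1 x2)^T) 0 0 = (x1 *m x1^T) 0 0 + (x2 *m x2^T) 0 0.
Proof. by rewrite tr_row_mx mul_row_col addE11. Qed.

Lemma eig_vec n (A : 'M[R]_n) : A^T = A -> (0 < n)%N ->
  exists2 v : 'rV[R]_n, v *m A = eig A n *: v & v != 0.
Proof.
move=> sA n0; have [P [r [_ _ _ [so cp] pe]]] := spectrumP sA.
apply/eigenvalueP; rewrite eigenvalue_root_char cp root_prod_XsubC /eig.
by apply: mem_nth; rewrite (spec_size sA); case: (n) n0.
Qed.

Lemma norm_gt0 n (v : 'rV[R]_n) : v != 0 -> 0 < (v *m v^T) 0 0.
Proof.
move=> vn; rewrite lt_def norm_ge0 andbT; apply: contra vn => /eqP H.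
apply/eqP/matrixP => i j; rewrite ord1 [RHS]mxE.
move: H; rewrite mxE => H.
have ge : forall k : 'I_n, true -> 0 <= v 0 k * v^T k 0.
  by move=> k _; rewrite mxE -expr2 sqr_ge0.
have := @psumr_eq0P _ _ _ _ ge H j isT; rewrite mxE => /eqP.
by rewrite mulf_eq0 orbb => /eqP.
Qed.

Lemma norm1 N : ((const_mx 1 : 'rV[R]_N) *m (const_mx 1 : 'rV[R]_N)^T) 0 0 = N%:R.
Proof.
rewrite mxE (eq_bigr (fun _ => 1)); last by move=> i _; rewrite !mxE mulr1.
by rewrite sumr_const card_ord.
Qed.

Lemma scaleE11 (a : R) (A : 'M[R]_1) : (a *: A) 0 0 = a * A 0 0.
Proof. by rewrite mxE. Qed.
Lemma zeroE11 : (0 : 'M[R]_1) 0 0 = 0.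
Proof. by rewrite mxE. Qed.

Section Bounds.
Variables (N : nat) (L1 L2 : 'M[R]_N) (w : 'rV[R]_N).
Local Notation M := (multiplex_laplacian L1 L2 w).
Hypothesis sM : M^T = M.
Hypothesis N0 : (0 < N)%N.

Lemma upper1 (v : 'rV[R]_N) mu kappa : v != 0 -> v *m L1 = mu *: v ->
  (forall i, kappa <= w 0 i) -> mu + kappa <= eig M (N + N).
Proof.
move=> vn ev hk.
have n0 : (0 < N + N)%N by rewrite addn_gt0 N0.
have F := eig_max_quad (row_mx v 0) sM n0.
rewrite mpx_quad row_norm ev -scalemxAl scaleE11 !mul0mx !zeroE11 in F.
have V0 := norm_gt0 vn.
have S : kappa * (v *m v^T) 0 0 <= \sum_i w 0 i * (v 0 i - (0 : 'rV[R]_N) 0 i) ^+ 2.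
  rewrite [X in kappa * X]mxE mulr_sumr; apply: ler_sum => i _.
  by rewrite !mxE subr0 -expr2 ler_wpM2r ?sqr_ge0.
rewrite -(ler_pM2r V0); move: F S; set V := (v *m v^T) 0 0; lra.
Qed.

Lemma upper2 (v : 'rV[R]_N) mu kappa : v != 0 -> v *m L2 = mu *: v ->
  (forall i, kappa <= w 0 i) -> mu + kappa <= eig M (N + N).
Proof.
move=> vn ev hk.
have n0 : (0 < N + N)%N by rewrite addn_gt0 N0.
have F := eig_max_quad (row_mx 0 v) sM n0.
rewrite mpx_quad row_norm ev -scalemxAl scaleE11 !mul0mx !zeroE11 in F.
have V0 := norm_gt0 vn.
have S : kappa * (v *m v^T) 0 0 <= \sum_i w 0 i * ((0 : 'rV[R]_N) 0 i - v 0 i) ^+ 2.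
  rewrite [X in kappa * X]mxE mulr_sumr; apply: ler_sum => i _.
  by rewrite !mxE sub0r sqrrN -expr2 ler_wpM2r ?sqr_ge0.
rewrite -(ler_pM2r V0); move: F S; set V := (v *m v^T) 0 0; lra.
Qed.

Hypothesis rM : M *m (const_mx 1 : 'rV[R]_(N + N))^T = 0.
Hypothesis pM : forall z : 'rV[R]_(N + N), 0 <= (z *m M *m z^T) 0 0.

Lemma lower_test (u : 'rV[R]_N) :
  eig M 2 * (2 * (u *m u^T) 0 0) <=
  (u *m L1 *m u^T) 0 0 + (u *m L2 *m u^T) 0 0 + 4 * \sum_i w 0 i * u 0 i ^+ 2.
Proof.
have n1 : (1 < N + N)%N by move: N0; lia.
have F := eig2_quad (x := row_mx u (- u)) sM n1 rM pM.
rewrite row_sum1 mulNmx oppE11 addrN in F; have {}F := F erefl.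
rewrite mpx_quad row_norm linearN /= !mulNmx !mulmxN !oppE11 opprK in F.
have E : \sum_i w 0 i * (u 0 i - (- u) 0 i) ^+ 2 = 4 * \sum_i w 0 i * u 0 i ^+ 2.
  by rewrite mulr_sumr; apply: eq_bigr => i _; rewrite mxE; ring.
rewrite E in F.
by move: F; set V := (u *m u^T) 0 0; lra.
Qed.
End Bounds.

Section Pert.
Variables (N : nat) (L : 'M[R]_N).
Hypothesis sL : L^T = L.
Hypothesis rL : L *m (const_mx 1 : 'rV[R]_N)^T = 0.
Local Notation o := (const_mx 1 : 'rV[R]_N).

Lemma quad_one : (o *m L *m o^T) 0 0 = 0.
Proof. by rewrite -mulmxA rL mulmx0 zeroE11. Qed.

Lemma oL : o *m L = 0.
Proof. by rewrite -(trmxK (o *m L)) trmx_mul sL rL trmx0. Qed.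

Lemma quad_pert j t :
  ((o + t *: delta_mx 0 j) *m L *m (o + t *: delta_mx 0 j)^T) 0 0 = t ^+ 2 * L j j.
Proof.
rewrite mulmxDl -scalemxAl oL add0r linearD linearZ /= mulmxDr -scalemxAr.
rewrite -scalemxAl -mulmxA rL mulmx0 scaler0 add0r -scalemxAl scaleE11 scaleE11.
rewrite -rowE trmx_delta -colE mxE mxE expr2 mulrA.
by [].
Qed.

Lemma sum_pert j t (f : 'I_N -> R) :
  \sum_i f i * ((o + t *: delta_mx 0 j) 0 i) ^+ 2 = \sum_i f i + f j * (2 * t + t ^+ 2).
Proof.
have E : forall i, f i * ((o + t *: delta_mx 0 j) 0 i) ^+ 2 =
    f i + (j == i)%:R * (f i * (2 * t + t ^+ 2)).
  by move=> i; rewrite !mxE /= eq_sym; case: (j == i); rewrite ?mulr1 ?mulr0 ?mul1r ?mul0r; ring.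
rewrite (eq_bigr _ (fun i _ => E i)) big_split /=; congr (_ + _).
rewrite (bigD1 j) //= eqxx mul1r big1 ?addr0 // => i ij.
by rewrite eq_sym (negbTE ij) mul0r.
Qed.

Lemma norm_pert j t :
  ((o + t *: delta_mx 0 j) *m (o + t *: delta_mx 0 j)^T) 0 0 =
  N%:R + (2 * t + t ^+ 2).
Proof.
have := sum_pert j t (fun _ => 1); rewrite sumr_const card_ord mul1r => <-.
by rewrite [LHS]mxE; apply: eq_bigr => i _; rewrite [_^T _ _]mxE mul1r expr2.
Qed.
End Pert.
End S.

End Helpers.
Import Helpers.

Theorem lemma1 (R : realType) (N : nat) (e1 e2 : rel 'I_N) :
  (0 < N)%N -> simple_graph e1 -> simple_graph e2 ->
  let L1 := laplacian R e1 in
  let L2 := laplacian R e2 in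
  let lamN1 := Num.max (eig_max L1) (eig_max L2) in
  forall c : R, 0 <= c ->
    lamN1 - 2 * c / N%:R <= Hmin L1 L2 c /\
    (c != 0 -> lamN1 - 2 * c / N%:R < Hmin L1 L2 c).
Proof.
move=> N0 [sy1 ir1] [sy2 ir2] L1 L2 lamN1 c c0.
have sL1 : L1^T = L1 by apply: lap_sym.
have sL2 : L2^T = L2 by apply: lap_sym.
have rL1 : L1 *m (const_mx 1 : 'rV[R]_N)^T = 0 by apply: lap_row0.
have rL2 : L2 *m (const_mx 1 : 'rV[R]_N)^T = 0 by apply: lap_row0.
have pL1 : forall x : 'rV[R]_N, 0 <= (x *m L1 *m x^T) 0 0 by apply: lap_psd.
have pL2 : forall x : 'rV[R]_N, 0 <= (x *m L2 *m x^T) 0 0 by apply: lap_psd.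
have [v1 ev1 v1n] := eig_vec sL1 N0.
have [v2 ev2 v2n] := eig_vec sL2 N0.
have Np : 0 < N%:R :> R by rewrite ltr0n.
set a := c / N%:R.
have aN : a * N%:R = c by rewrite /a divfK // gt_eqF.
have a0 : 0 <= a by rewrite /a divr_ge0 // ler0n.
have N2 : 0 < N%:R ^+ 2 :> R by rewrite exprn_gt0.
have D0 : 0 < c + N%:R ^+ 2 by lra.
set t := c / (c + N%:R ^+ 2).
have tD : t * (c + N%:R ^+ 2) = c by rewrite /t divfK // gt_eqF.
have t0 : 0 <= t by rewrite /t divr_ge0 // ltW.
have t1 : t <= 1 by rewrite /t ler_pdivrMr // mul1r; lra.
have tN : t * N%:R <= a.
  rewrite -(ler_pM2r Np) aN.
  have : 0 <= t * c by rewrite mulr_ge0.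
  move: tD; rewrite expr2; nra.
set dB := a * t / (N%:R + 3).
set d := Num.min (a / 2) dB.
have dle1 : d <= a / 2 by rewrite /d ge_min lexx.
have dle2 : d <= dB by rewrite /d ge_min lexx orbT.
have claim : forall w : 'rV[R]_N, (forall i, 0 <= w 0 i) -> \sum_i w 0 i = c ->
    lamN1 - 2 * a + d <= eig (multiplex_laplacian L1 L2 w) (N + N)
                         - eig (multiplex_laplacian L1 L2 w) 2.
  move=> w hw hs.
  have sM := mpx_sym w sL1 sL2.
  have rM := mpx_row0 w rL1 rL2.
  have pM := mpx_psd pL1 pL2 hw.
  set ln := eig (multiplex_laplacian L1 L2 w) (N + N).
  set l2 := eig (multiplex_laplacian L1 L2 w) 2.
  have lamle : forall kappa, (forall i, kappa <= w 0 i) -> lamN1 + kappa <= ln.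
    move=> k hk.
    have h1 := upper1 sM N0 v1n ev1 hk.
    have h2 := upper2 sM N0 v2n ev2 hk.
    by rewrite /lamN1 /eig_max -lerBrDr ge_max !lerBrDr h1 h2.
  case: (pselect (exists j, w 0 j < a / 2)) => [[j wj]|hA].
    have F := lower_test sM N0 rM pM (const_mx 1 + t *: delta_mx 0 j).
    rewrite norm_pert (quad_pert sL1 rL1) (quad_pert sL2 rL2) sum_pert hs in F.
    have d1 : L1 j j <= N%:R by rewrite /L1 /laplacian mxE eqxx; exact: lap_deg_le.
    have d2 : L2 j j <= N%:R by rewrite /L2 /laplacian mxE eqxx; exact: lap_deg_le.
    have hl := lamle 0 hw.
    have key : l2 <= 2 * a - dB.
      have h1 : t ^+ 2 * L1 j j <= t ^+ 2 * N%:R by rewrite ler_wpM2l ?sqr_ge0.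
      have h1' : t ^+ 2 * L2 j j <= t ^+ 2 * N%:R by rewrite ler_wpM2l ?sqr_ge0.
      have T0 : 0 <= 2 * t + t ^+ 2 by have := sqr_ge0 t; lra.
      have h2 : w 0 j * (2 * t + t ^+ 2) <= a / 2 * (2 * t + t ^+ 2).
        by rewrite ler_wpM2r // ltW.
      have h3 : t * (t * N%:R) <= t * a by rewrite ler_wpM2l.
      have h4 : 0 <= a * t ^+ 2 by rewrite mulr_ge0 ?sqr_ge0.
      set K := N%:R + (2 * t + t ^+ 2).
      have hK : 2 * a * t <= (2 * a - l2) * (2 * K).
        move: F aN h1 h1' h2 h3 h4; rewrite -/l2 /K; nra.
      have Kp : 0 < 2 * K by rewrite /K; lra.
      have g0 : 0 <= 2 * a - l2.
        rewrite -(pmulr_lge0 _ Kp); apply: le_trans hK.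
        by have := mulr_ge0 a0 t0; lra.
      have KN : K <= N%:R + 3.
        have : t ^+ 2 <= 1 by rewrite expr2; nra.
        rewrite /K; lra.
      have h5 : a * t <= (2 * a - l2) * (N%:R + 3).
        have : (2 * a - l2) * K <= (2 * a - l2) * (N%:R + 3) by rewrite ler_wpM2l.
        move: hK; lra.
      have : dB <= 2 * a - l2 by rewrite /dB ler_pdivrMr //; lra.
      lra.
    lra.
  have hA' : forall i, a / 2 <= w 0 i.
    by move=> i; rewrite leNgt; apply/negP => h; apply: hA; exists i.
  have hl := lamle _ hA'.
  have F := lower_test sM N0 rM pM (const_mx 1).
  have E : \sum_i w 0 i * (const_mx 1 : 'rV[R]_N) 0 i ^+ 2 = c.
    by rewrite -hs; apply: eq_bigr => i _; rewrite mxE expr1n mulr1.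
  rewrite (quad_one rL1) (quad_one rL2) norm1 E -/l2 in F.
  have : l2 * N%:R <= 2 * a * N%:R by lra.
  rewrite ler_pM2r // => l2a.
  lra.
have H : lamN1 - 2 * a + d <= Hmin L1 L2 c.
  rewrite /Hmin; apply: lb_le_inf.
    eexists; exists (const_mx a) => //; split.
      by move=> i; rewrite mxE.
    under eq_bigr do rewrite mxE.
    by rewrite sumr_const card_ord -mulr_natr aN.
  by move=> y [w [hw hs] <-]; exact: claim.
have E2 : 2 * c / N%:R = 2 * a by rewrite /a mulrA.
have d0 : 0 <= d.
  rewrite /d le_min; apply/andP; split; first by lra.
  by rewrite /dB; apply: divr_ge0; [exact: mulr_ge0 | lra].
rewrite E2; split; first by lra.
move=> cn.
have cp : 0 < c by rewrite lt_def cn c0.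
have ap : 0 < a by rewrite /a divr_gt0.
have tp : 0 < t by rewrite /t divr_gt0.
have dp : 0 < d.
  rewrite /d lt_min; apply/andP; split; first by lra.
  by rewrite /dB; apply: divr_gt0; [exact: mulr_gt0 | lra].
lra.
Qed.
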